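(* Let $n \geqslant 2$ and let $p \geqslant 2$ be an integer. For any $\varepsilon_1, \varepsilon_2 \in [0,1]$ with $\varepsilon_1 > \varepsilon_2$, we have $\mathcal X(\varepsilon_1, p) \subset \mathcal X(\varepsilon_2, p)$ (proper inclusion).
   Context: For $\bm x \in \mathbb{R}^n_{\geqslant 0}$ and $p \geqslant 1$, $\|\bm x\|_p = (\sum_{i=1}^n x_i^p)^{1/p}$. Define $D_p = n^{1-1/p} - 1$. For an integer $p\geqslant 2$ and $\varepsilon \in [0,1]$, define $\mathcal X(\varepsilon,p) = \{\bm x \in \mathbb{R}^n_{\geqslant 0} : (1+\varepsilon D_p)\|\bm x\|_p \leqslant \|\bm x\|_1\}$ (the set of ''at least $(\varepsilon,p)$-fair'' vectors). *)

(* Defs.v *)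
From mathcomp Require Import all_boot all_order all_algebra.
From mathcomp Require Import all_classical all_reals all_analysis.
Set Implicit Arguments. Unset Strict Implicit. Unset Printing Implicit Defensive.
Import Order.TTheory GRing.Theory Num.Theory.
Local Open Scope ring_scope.

Definition nonneg_vec (R : realType) (n : nat) (x : 'I_n -> R) : Prop :=
  forall i, 0 <= x i.

Definition pnorm (R : realType) (n : nat) (p : R) (x : 'I_n -> R) : R :=
  powR (\sum_(i < n) powR (x i) p) p^-1.

Definition Dp (R : realType) (n : nat) (p : R) : R :=
  powR (n%:R) (1 - p^-1) - 1.

Definition fairset (R : realType) (n : nat) (eps p : R) : set ('I_n -> R) :=
  [set x | nonneg_vec x /\ (1 + eps * Dp n p) * pnorm p x <= pnorm 1 x].

(* Main.v *)
Require Import Defs.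
From mathcomp Require Import all_boot all_order all_algebra.
From mathcomp Require Import all_classical all_reals all_analysis.
Import Order.TTheory GRing.Theory Num.Theory.
Local Open Scope ring_scope.
Local Open Scope classical_set_scope.

Lemma powRXinv (R : realType) (p : nat) (a : R) : (0 < p)%N -> 0 <= a ->
  (a ^+ p) `^ (p%:R^-1) = a.
Proof.
move=> p0 a0; rewrite -powR_mulrn // -powRrM mulfV ?powRr1 //.
by rewrite pnatr_eq0 -lt0n.
Qed.

Lemma pnorm1 (R : realType) (n : nat) (x : 'I_n -> R) : nonneg_vec x ->
  pnorm 1 x = \sum_(i < n) x i.
Proof.
move=> hx; rewrite /pnorm invr1 powRr1; last by apply: sumr_ge0 => i _; rewrite powR_ge0.
by apply: eq_bigr => i _; rewrite powRr1.
Qed.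

Theorem proposition1 (R : realType) (n p : nat) (eps1 eps2 : R) :
  (2 <= n)%N -> (2 <= p)%N ->
  0 <= eps1 <= 1 -> 0 <= eps2 <= 1 -> eps2 < eps1 ->
  @fairset R n eps1 p%:R `<=` @fairset R n eps2 p%:R /\
  @fairset R n eps1 p%:R <> @fairset R n eps2 p%:R.
Proof.
case: n => [|[|m]] // _ hp /andP[e10 e11] /andP[e20 e21] elt.
set q : R := p%:R.
have q2 : 2 <= q by rewrite /q (ler_nat R 2).
have q0 : 0 < q by apply: lt_le_trans q2.
have r0 : 0 < 1 - q^-1.
  by rewrite subr_gt0 invf_lt1 //; apply: lt_le_trans q2; rewrite ltr1n.
have N1 : 1 < (m.+2)%:R :> R by rewrite ltr1n.
have Dgt0 : 0 < Dp m.+2 q.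
  rewrite /Dp subr_gt0.
  have := @gt0_ltr_powR R _ r0 1 (m.+2)%:R.
  by rewrite powR1; apply; rewrite ?qualifE /= ?ler0n.
have Dge0 := ltW Dgt0.
split.
  move=> x [hx hle]; split => //; apply: le_trans hle.
  apply: ler_wpM2r; first exact: powR_ge0.
  by rewrite lerD2l ler_wpM2r // ltW.
set D := Dp m.+2 q.
set c := 1 + eps2 * D.
have c1 : 1 <= c by rewrite lerDl mulr_ge0.
have c0 : 0 <= c by apply: le_trans c1.
pose P : {poly R} := (1 + 'X *+ m.+1) ^+ p - (c ^+ p) *: (1 + ('X ^+ p) *+ m.+1).
have hP s : P.[s] = (1 + s *+ m.+1) ^+ p - c ^+ p * (1 + s ^+ p *+ m.+1).
  by rewrite /P !(hornerE, hornerMn, hornerXn).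
have [t t01 Pt] : exists2 t, t \in `[0, 1]%R & P.[t] = 0.
  apply: (@IVT R (horner P) 0 1 0) => //.
  - by apply: derivable_within_continuous => x _; exact: derivable_horner.
  have h0 : P.[0] <= 0.
    rewrite hP expr0n /= (gtn_eqF (leq_trans _ hp)) // mul0rn !addr0 mulr1.
    by rewrite expr1n subr_le0 exprn_ege1.
  have h1 : 0 <= P.[1].
    rewrite hP expr1n nat1r subr_ge0.
    have cle : c <= (m.+2)%:R `^ (1 - q^-1).
      have -> : (m.+2)%:R `^ (1 - q^-1) = 1 + D by rewrite /D /Dp [RHS]addrC subrK.
      by rewrite lerD2l ler_piMl.
    have N0 : 0 <= (m.+2)%:R :> R by rewrite ler0n.
    rewrite -!powR_mulrn //.
    have := @ge0_ler_powR R _ (ltW q0) c ((m.+2)%:R `^ (1 - q^-1)).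
    move=> /(_ _ _ cle) H; apply: (le_trans (ler_wpM2r N0 (H _ _))); rewrite ?qualifE /= ?powR_ge0 //.
    rewrite -powRrM.
    rewrite -[X in _ * X <= _](powRr1 N0) -powRD; last by rewrite pnatr_eq0 implybT.
    by rewrite mulrBl mul1r mulVf ?gt_eqF // subrK.
  by rewrite ge_min le_max h0 h1 orbT.
have t0 : 0 <= t by move: t01; rewrite in_itv /= => /andP[].
pose x := fun i : 'I_m.+2 => if i == ord0 then 1 else t.
have hx : nonneg_vec x by move=> i; rewrite /x; case: ifP.
set S := 1 + t *+ m.+1.
set Q := 1 + t ^+ p *+ m.+1.
have hS : \sum_i x i = S.
  rewrite big_ord_recl /x eqxx; congr (_ + _).
  rewrite (eq_bigr (fun _ => t)); first by rewrite sumr_const card_ord.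
  by [].
have hQ : \sum_i powR (x i) q = Q.
  rewrite big_ord_recl /x eqxx powR1; congr (_ + _).
  rewrite (eq_bigr (fun _ => t ^+ p)); first by rewrite sumr_const card_ord.
  by move=> i _; rewrite /= powR_mulrn.
have pq : pnorm q x = Q `^ q^-1 by rewrite /pnorm hQ.
have p1 : pnorm 1 x = S by rewrite pnorm1 // hS.
have S0 : 0 <= S by rewrite addr_ge0 // mulrn_wge0.
have Q0 : 0 < Q by rewrite ltr_wpDr // mulrn_wge0 // exprn_ge0.
have Qp : 0 < Q `^ q^-1 by rewrite powR_gt0.
have key : S = c * Q `^ q^-1.
  move/eqP: Pt; rewrite hP subr_eq0 => /eqP /(congr1 (fun y => y `^ q^-1)).
  rewrite powRM ?exprn_ge0 ?(ltW Q0) // !powRXinv //; exact: leq_trans hp.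
have xin2 : fairset eps2 q x by split => //; rewrite pq p1 key.
move=> E; have := xin2; rewrite -E => -[_]; rewrite pq p1 key ler_pM2r //.
rewrite lerD2l ler_pM2r //; apply/negP; rewrite -ltNge //.
Qed.
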